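(* For every $0<\alpha<1$, every fixed integer $r\ge3$, and $k=\mathcal{O}(n^\alpha)$, there exists a binary $(r,k)$-batch code of dimension $n$ with rate $\frac{r}{r+k}$.
   Context: A binary linear code of length $N$ encoding $n$ information bits $x_1,\dots,x_n$ is an $(r,k)$-batch code if for every multiset $\{i_1,\dots,i_k\}$ of indices there exist $k$ mutually disjoint sets $R_1,\dots,R_k$ of coordinates, each of size at most $r$, such that $x_{i_j}$ is a function of the codeword bits indexed by $R_j$. Its rate is $n/N$. *)

(* Defs.v *)
From Stdlib Require Import Reals.
From mathcomp Require Import all_boot all_order all_algebra.
Set Implicit Arguments. Unset Strict Implicit. Unset Printing Implicit Defensive.
Import GRing.Theory.

(* x_i is a function of the codeword bits indexed by S: any two messages whose
   codewords agree on S have the same i-th information bit. *)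
Definition recovers (n N : nat) (G : 'M['F_2]_(n, N)) (S : {set 'I_N}) (i : 'I_n) : Prop :=
  forall x y : 'rV['F_2]_n,
    (forall t : 'I_N, t \in S -> (x *m G)%R ord0 t = (y *m G)%R ord0 t) -> x ord0 i = y ord0 i.

(* (r,k)-batch code: for every multiset {i_1,...,i_k} of indices (represented
   by a k-indexed family, repetitions allowed) there are k mutually disjoint
   recovery sets of size at most r. *)
Definition is_batch_code (n N : nat) (G : 'M['F_2]_(n, N)) (r k : nat) : Prop :=
  forall idx : 'I_k -> 'I_n,
    exists R : 'I_k -> {set 'I_N},
      (forall j, #|R j| <= r)%N /\
      (forall j j', j != j' -> [disjoint R j & R j']) /\
      (forall j, recovers G (R j) (idx j)).

Definition rate (n N : nat) : rat := GRing.mul (n%:R : rat) (GRing.inv (N%:R : rat)).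

Definition bigO_pow (k : nat -> nat) (alpha : R) : Prop :=
  exists (C : R) (n1 : nat), forall n : nat, (n1 <= n)%N ->
    Rle (INR (k n)) (Rmult C (Rpower (INR n) alpha)).

(* Main.v *)
Require Import Defs.
From Stdlib Require Import Reals Lra ZArith.
From mathcomp Require Import all_boot all_order all_algebra.
From mathcomp Require Import zify ring.
Set Implicit Arguments. Unset Strict Implicit. Unset Printing Implicit Defensive.
Import GRing.Theory Num.Theory.

Lemma disjP (T : finType) (A B : {set T}) :
  (forall x, x \in A -> x \in B -> False) -> [disjoint A & B].
Proof.
move=> H; rewrite disjoint_subset; apply/subsetP => x xA; rewrite inE.
by apply/negP => xB; exact: H x xA xB.
Qed.

Lemma card_bigcup_le (I T : finType) (J : {pred I}) (F : I -> {set T}) :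
  #|\bigcup_(j in J) F j| <= \sum_(j in J) #|F j|.
Proof.
elim/big_rec2: _ => [|j A s _ IH]; first by rewrite cards0.
by rewrite (leq_trans (leq_card_setU _ _).1) // leq_add2l.
Qed.

Section Abstract.
Variables (n k r E : nat) (edge : nat -> {set 'I_n}).
Hypothesis Hr : 0 < r.
Hypothesis Hsize : forall e, e < E -> #|edge e| <= r.
Hypothesis Hlin : forall e e' (v w : 'I_n), e < E -> e' < E -> e != e' -> v != w ->
  v \in edge e -> w \in edge e -> v \in edge e' -> w \in edge e' -> False.
Hypothesis Htri : forall e1 e2 e3 (x12 x13 x23 : 'I_n), e1 < E -> e2 < E -> e3 < E ->
  e1 != e2 -> e1 != e3 -> e2 != e3 -> x12 != x13 -> x12 != x23 -> x13 != x23 ->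
  x12 \in edge e1 -> x12 \in edge e2 -> x13 \in edge e1 -> x13 \in edge e3 ->
  x23 \in edge e2 -> x23 \in edge e3 -> False.
Hypothesis Hdeg : forall u : 'I_n, k.-1 <= #|[set e : 'I_E | u \in edge e]|.

Definition conflict e u e' u' :=
  (e == e') || [exists w : 'I_n, [&& w \in edge e, w != u, w \in edge e' & w != u']].

Lemma conflictC e u e' u' : conflict e u e' u' = conflict e' u' e u.
Proof.
rewrite /conflict eq_sym; congr (_ || _).
by apply/existsP/existsP => -[w /and4P[a b c d]]; exists w; rewrite a b c d.
Qed.

Section Idx.
Variable idx : 'I_k -> 'I_n.

Definition firstb (j : 'I_k) := [forall j' : 'I_k, (j' < j) ==> (idx j' != idx j)].

Lemma first_ex j : exists g, firstb g /\ idx g = idx j.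
Proof.
case: (@arg_minnP _ j (fun g => idx g == idx j) val (eqxx _)) => g /eqP Hg Hmin.
exists g; split => //; apply/forallP => j'; apply/implyP => lt.
apply/negP => /eqP E'; have := Hmin j'; rewrite E' Hg eqxx => /(_ isT).
by rewrite leqNgt lt.
Qed.

Lemma first_uniq g1 g2 : firstb g1 -> firstb g2 -> idx g1 = idx g2 -> g1 = g2.
Proof.
move=> /forallP F1 /forallP F2 E12; case: (ltngtP g1 g2) => H.
- by have := F2 g1; rewrite H E12 eqxx.
- by have := F1 g2; rewrite H E12 eqxx.
- exact: val_inj.
Qed.

Definition Inv (t : nat) (ch : 'I_k -> nat) :=
  (forall j : 'I_k, j < t -> ~~ firstb j ->
     [/\ ch j < E, idx j \in edge (ch j) &
         forall j', idx j' \in edge (ch j) -> idx j' = idx j]) /\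
  (forall j j' : 'I_k, j < t -> j' < t -> ~~ firstb j -> ~~ firstb j' -> j != j' ->
     ~~ conflict (ch j) (idx j) (ch j') (idx j')).

Lemma step (jt : 'I_k) ch : Inv jt ch -> ~~ firstb jt ->
  exists e, [/\ e < E, idx jt \in edge e,
     (forall j', idx j' \in edge e -> idx j' = idx jt) &
     forall j : 'I_k, j < jt -> ~~ firstb j -> ~~ conflict e (idx jt) (ch j) (idx j)].
Proof.
move=> [Inv1 _] Njt.
set u := idx jt.
have [f [Ff Hf]] := first_ex jt.
have fjt : f != jt by apply/eqP => fj; move: Njt; rewrite -fj Ff.
set J := [set: 'I_k] :\ jt :\ f.
have cardJ : (#|J|).+2 = k.
  have h1 := cardsD1 jt [set: 'I_k]; have h2 := cardsD1 f ([set: 'I_k] :\ jt).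
  have h0 : #|[set: 'I_k]| = k by rewrite cardsT card_ord.
  move: h1 h2; rewrite !inE fjt /= => h1 h2.
  by rewrite -[in RHS]h0 h1 h2.
pose badp (j : 'I_k) (e : 'I_E) := if firstb j then (idx j \in edge e) && (idx j != u)
   else (j < jt) && conflict e u (ch j) (idx j).
pose Bad j := [set e : 'I_E | (u \in edge e) && badp j e].
have Bad1 : forall j, #|Bad j| <= 1.
  move=> j; apply/card_le1_eqP => e1 e2; rewrite !inE => /andP[u1 b1] /andP[u2 b2].
  apply: val_inj; apply/eqP; apply/negPn/negP; rewrite eq_sym => ne.
  move: b1 b2; rewrite /badp; case: ifP => Fj.
  - move=> /andP[w1 wu] /andP[w2 _].
    exact: (Hlin (ltn_ord e1) (ltn_ord e2) ne wu w1 u1 w2 u2).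
  - move=> /andP[ltj c1] /andP[_ c2].
    have [chE ju Hj] := Inv1 j ltj (negbT Fj).
    case: (eqVneq (idx j) u) => Hju.
    + have key : forall e : 'I_E, u \in edge e -> conflict e u (ch j) (idx j) -> val e = ch j.
        move=> e ue; rewrite /conflict Hju => /orP[/eqP//|/existsP[w /and4P[we wu wc _]]].
        case: (eqVneq (val e) (ch j)) => // ne'; exfalso.
        have uw : u != w by rewrite eq_sym.
        by apply: (Hlin (ltn_ord e) chE ne' uw ue we _ wc); rewrite -Hju.
      by move: ne; rewrite (key _ u1 c1) (key _ u2 c2) eqxx.
    + have uc : u \notin edge (ch j).
        apply/negP => uc; move: Hju; rewrite /u (Hj jt uc) eqxx //.
      have ex : forall e : 'I_E, u \in edge e -> conflict e u (ch j) (idx j) ->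
          exists w : 'I_n, [/\ w \in edge e, w != u & w \in edge (ch j)].
        move=> e ue /orP[/eqP ec|/existsP[w /and4P[we wu wc _]]].
        * by move: uc; rewrite -ec ue.
        * by exists w.
      have [w1 [w1e w1u w1c]] := ex _ u1 c1.
      have [w2 [w2e w2u w2c]] := ex _ u2 c2.
      have e1c : val e1 != ch j by apply/eqP => h; move: uc; rewrite -h u1.
      have e2c : val e2 != ch j by apply/eqP => h; move: uc; rewrite -h u2.
      case: (eqVneq w1 w2) => [w12|w12].
      * have uw : u != w1 by rewrite eq_sym.
        by apply: (Hlin (ltn_ord e1) (ltn_ord e2) ne uw u1 w1e u2); rewrite w12.
      * by apply: (Htri (ltn_ord e1) (ltn_ord e2) chE ne e1c e2c _ _ w12 u1 u2 w1e w1c w2e w2c);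
          rewrite eq_sym.
have cardU : #|\bigcup_(j in J) Bad j| <= k.-2.
  apply: (leq_trans (card_bigcup_le _ _)).
  apply: (@leq_trans (\sum_(j in J) 1)); first exact: leq_sum.
  by rewrite sum1_card; lia.
have : ~~ ([set e : 'I_E | u \in edge e] \subset \bigcup_(j in J) Bad j).
  apply/negP => /subset_leq_card H; have := Hdeg u.
  move: cardU H; lia.
case/subsetPn => e; rewrite inE => ue notbad.
exists (val e); split; [exact: ltn_ord | exact: ue | idtac | idtac].
- move=> j' je; apply/eqP/negPn/negP => ne.
  have [g [Fg Hg]] := first_ex j'.
  apply: (negP notbad); apply/bigcupP; exists g.
    rewrite !inE andbT; apply/andP; split.
      by apply/eqP => gf; move: ne; rewrite -Hg gf Hf eqxx.
    by apply/eqP => gj; move: ne; rewrite -Hg gj eqxx.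
  by rewrite inE ue /badp Fg Hg je ne.
- move=> j ltj Fj; apply/negP => c.
  apply: (negP notbad); apply/bigcupP; exists j.
    rewrite !inE andbT; apply/andP; split.
      by apply/eqP => jf; move: Fj; rewrite jf Ff.
    by apply/eqP => jj; move: ltj; rewrite jj ltnn.
  by rewrite inE ue /badp (negbTE Fj) ltj c.
Qed.

Lemma build t : t <= k -> exists ch, Inv t ch.
Proof.
elim: t => [|t IH] lt.
  by exists (fun _ => 0); split.
have [ch [I1 I2]] := IH (ltnW lt).
pose jt : 'I_k := Ordinal lt.
have lts : forall j : 'I_k, (j < t.+1) = (j == jt) || (j < t).
  by move=> j; rewrite ltnS leq_eqVlt -val_eqE.
case Fjt: (firstb jt).
  exists ch; split.
    move=> j; rewrite lts => /orP[/eqP ->|]; first by rewrite Fjt.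
    exact: I1.
  move=> j j'; rewrite !lts => /orP[/eqP ->|h1]; first by rewrite Fjt.
  move=> /orP[/eqP ->|h2]; first by rewrite Fjt.
  exact: I2.
have [e [eE ue Ue Ce]] := step (jt:=jt) (conj I1 I2) (negbT Fjt).
exists (fun j => if j == jt then e else ch j); split.
  move=> j; rewrite lts => /orP[/eqP ->|h]; first by rewrite eqxx.
  have -> : (j == jt) = false by apply/eqP => h'; move: h; rewrite h' ltnn.
  exact: I1.
move=> j j'; rewrite !lts => /orP[/eqP ->|h1] /orP[/eqP ->|h2] F1 F2 ne.
- by rewrite eqxx in ne.
- have -> : (j' == jt) = false by apply/eqP => h'; move: h2; rewrite h' ltnn.
  by rewrite eqxx; apply: Ce.
- have -> : (j == jt) = false by apply/eqP => h'; move: h1; rewrite h' ltnn.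
  by rewrite eqxx conflictC; apply: Ce.
- have -> : (j == jt) = false by apply/eqP => h'; move: h1; rewrite h' ltnn.
  have -> : (j' == jt) = false by apply/eqP => h'; move: h2; rewrite h' ltnn.
  exact: I2.
Qed.

End Idx.

Section Code.
Variable N' : nat.
Hypothesis HN : n + E <= N'.+1.

Definition Gm : 'M['F_2]_(n, N'.+1) := \matrix_(s, t)
  (if (t : nat) < n then (((s : nat) == t)%:R)%R
   else if (t : nat) < n + E then ((s \in edge (t - n))%:R)%R else 0%R).

Definition pos (i : nat) : 'I_N'.+1 := inord i.

Lemma pos_inj i j : i < N'.+1 -> j < N'.+1 -> pos i = pos j -> i = j.
Proof. by move=> hi hj h; have := congr1 (@nat_of_ord _) h; rewrite /pos !inordK. Qed.

Lemma vltN (v : 'I_n) : v < N'.+1.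
Proof. exact: leq_trans (ltn_ord v) (leq_trans (leq_addr _ _) HN). Qed.

Lemma eltN e : e < E -> n + e < N'.+1.
Proof. by move=> he; apply: leq_trans HN; rewrite ltn_add2l. Qed.

Lemma cw_sys (x : 'rV['F_2]_n) (v : 'I_n) : (x *m Gm)%R ord0 (pos v) = x ord0 v.
Proof.
rewrite mxE (bigD1 v) //= /Gm mxE /pos inordK ?vltN // ltn_ord eqxx mulr1.
rewrite big1 ?addr0 //; move=> s sv; rewrite mxE inordK ?vltN // ltn_ord.
have -> : ((s : nat) == v) = false by apply/negbTE; rewrite val_eqE.
by rewrite mulr0.
Qed.

Lemma cw_par (x : 'rV['F_2]_n) e : e < E ->
  (x *m Gm)%R ord0 (pos (n + e)) = (\sum_(s in edge e) x ord0 s)%R.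
Proof.
move=> he; rewrite mxE [RHS]big_mkcond /=; apply: eq_bigr => s _.
rewrite /Gm mxE /pos inordK ?eltN // ltnNge leq_addr /= ltn_add2l he addKn.
by case: (s \in edge e); rewrite ?mulr1 ?mulr0.
Qed.

Definition sysS (v : 'I_n) : {set 'I_N'.+1} := [set pos v].
Definition edgeS (u : 'I_n) e : {set 'I_N'.+1} :=
  pos (n + e) |: [set pos (nat_of_ord w) | w : 'I_n in edge e :\ u].

Lemma rec_sys v : recovers Gm (sysS v) v.
Proof.
move=> x y H; rewrite -!cw_sys; apply: H; by rewrite inE.
Qed.

Lemma rec_edge u e : e < E -> u \in edge e -> recovers Gm (edgeS u e) u.
Proof.
move=> he ue x y H.
have Hp := H _ (setU11 _ _); rewrite !cw_par // in Hp.
move: Hp; rewrite !(bigD1 u ue) /=.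
have -> : (\sum_(i in edge e | i != u) x ord0 i)%R = (\sum_(i in edge e | i != u) y ord0 i)%R.
  apply: eq_bigr => w /andP[we wu]; rewrite -!cw_sys; apply: H.
  by rewrite setU1r //; apply/imsetP; exists w => //; rewrite !inE wu.
by move/addIr.
Qed.

Lemma card_edgeS u e : e < E -> u \in edge e -> #|edgeS u e| <= r.
Proof.
move=> he ue; rewrite (leq_trans (leq_card_setU _ _).1) // cards1.
apply: leq_trans (leq_add (leqnn 1) (leq_imset_card _ _)) _.
by have := Hsize he; rewrite (cardsD1 u (edge e)) ue.
Qed.

End Code.

Lemma abstract_batch N : n + E <= N -> 0 < N -> exists G : 'M['F_2]_(n, N), is_batch_code G r k.
Proof.
case: N => // N' HN _; exists (Gm N'); move=> idx.
have [ch [I1 I2]] := build idx (leqnn k).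
exists (fun j => if firstb idx j then sysS N' (idx j) else edgeS N' (idx j) (ch j)).
split; [|split].
- move=> j; case: ifP => Fj; first by rewrite cards1.
  have [he ue _] := I1 j (ltn_ord j) (negbT Fj); exact: card_edgeS.
- move=> j j' ne; apply: disjP => t.
  have pv : forall v : 'I_n, v < N'.+1 := vltN HN.
  have pe : forall e, e < E -> n + e < N'.+1 := eltN HN.
  have sysE : forall (v w : 'I_n), pos N' v = pos N' w -> v = w.
    by move=> v w h; apply: val_inj; apply: (pos_inj (pv v) (pv w) h).
  have sysP : forall (v : 'I_n) e, e < E -> pos N' v = pos N' (n + e) -> False.
    move=> v e he h; have := pos_inj (pv v) (pe e he) h => h'.
    by move: (ltn_ord v); rewrite h' ltnNge leq_addr.
  have parE : forall e e', e < E -> e' < E -> pos N' (n + e) = pos N' (n + e') -> e = e'.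
    by move=> e e' he he' h; apply/eqP; rewrite -(eqn_add2l n); apply/eqP; exact: pos_inj (pe e he) (pe e' he') h.
  rewrite /edgeS /sysS; case: ifP => Fj; case: ifP => Fj'.
  + rewrite !inE => /eqP -> /eqP /sysE h; move: ne; apply/negP/negPn/eqP.
    exact: (first_uniq Fj Fj').
  + have [he ue U] := I1 j' (ltn_ord j') (negbT Fj').
    rewrite !inE => /eqP -> /orP[/eqP h|/imsetP[w]]; first exact: sysP h.
    rewrite !inE => /andP[wu we] /sysE h'.
    by have := U j; rewrite h' => /(_ we) E'; rewrite E' eqxx in wu.
  + have [he ue U] := I1 j (ltn_ord j) (negbT Fj).
    move=> /setU1P[-> |/imsetP[w]]; rewrite !inE.
      by move=> /eqP h; apply: (sysP (idx j') _ he); rewrite h.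
    move=> /andP[wu we] -> /eqP /sysE h'.
    by have := U j'; rewrite -h' => /(_ we) E'; rewrite E' eqxx in wu.
  + have [he ue U] := I1 j (ltn_ord j) (negbT Fj).
    have [he' ue' U'] := I1 j' (ltn_ord j') (negbT Fj').
    have nc := I2 j j' (ltn_ord j) (ltn_ord j') (negbT Fj) (negbT Fj') ne.
    move: nc; rewrite /conflict negb_or => /andP[nce /existsPn nw].
    move=> /setU1P[-> |/imsetP[w]].
      move=> /setU1P[h|/imsetP[w']].
        by move: nce; rewrite (parE _ _ he he' h) eqxx.
      by move=> _ h; apply: (sysP w' _ he); rewrite h.
    move=> /setD1P[wu we] ->.
    move=> /setU1P[h|/imsetP[w']]; first exact: (sysP _ _ he' h).
    move=> /setD1P[wu' we'] /sysE h'.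
    by move: (nw w); rewrite we wu h' we' wu'.
- move=> j; case: ifP => Fj; first exact: rec_sys.
  have [he ue _] := I1 j (ltn_ord j) (negbT Fj); exact: rec_edge.
Qed.

End Abstract.

Lemma congD (M x1 y1 x2 y2 : nat) : x1 = y1 %[mod M] -> x2 = y2 %[mod M] ->
  x1 + x2 = y1 + y2 %[mod M].
Proof. by move=> h1 h2; rewrite -modnDm h1 h2 modnDm. Qed.

Lemma cancel_small (M c x y : nat) : c + x = c + y %[mod M] -> x < M -> y < M -> x = y.
Proof.
move=> h hx hy; apply/eqP; rewrite -(modn_small hx) -(modn_small hy).
by rewrite -(eqn_modDl c); apply/eqP.
Qed.

Lemma small2 (i j b b' M r : nat) : i < r -> j < r -> 3 * r * b < M -> 3 * r * b' < M ->
  i * b + j * b' < M.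
Proof. move=> *; nia. Qed.

Lemma small3 (i j l b b' b'' M r : nat) : i < r -> j < r -> l < r -> 3 * r * b < M ->
  3 * r * b' < M -> 3 * r * b'' < M -> i * b + j * b' + l * b'' < M.
Proof. move=> *; nia. Qed.

Lemma lin_cancel (i j b b' : nat) : i != j -> i * b + j * b' = i * b' + j * b -> b = b'.
Proof. by case: (ltngtP i j) => // h _ h2; nia. Qed.

Section Concrete.
Variables (n r M k : nat) (B : seq nat).
Hypothesis HM : 0 < M.
Hypothesis HnM : n <= r * M.
Hypothesis HBu : uniq B.
Hypothesis HBs : size B = k.-1.
Hypothesis HBb : forall b, b \in B -> 3 * r * b < M.
Hypothesis HBt : forall b1 b2 b3, b1 \in B -> b2 \in B -> b3 \in B ->
  b1 != b2 -> b1 != b3 -> b2 != b3 -> forall p q s, p < r -> q < r -> s < r ->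
  p != q -> p != s -> q != s -> p * b1 + s * b2 + q * b3 != q * b1 + p * b2 + s * b3.

Definition cE := M * k.-1.
Definition ea e := e %/ k.-1.
Definition eb e := nth 0 B (e %% k.-1).
Definition cedge e : {set 'I_n} :=
  [set v : 'I_n | v %% M == (ea e + (v %/ M) * eb e) %% M].

Lemma cedgeP e (v : 'I_n) : (v \in cedge e) = (v == ea e + (v %/ M) * eb e %[mod M]).
Proof. by rewrite inE. Qed.

Lemma kpos e : e < cE -> 0 < k.-1.
Proof. by rewrite /cE; case: (k.-1) => //; rewrite muln0. Qed.

Lemma ea_lt e : e < cE -> ea e < M.
Proof. move=> he; have kp := kpos he; by rewrite /ea ltn_divLR // mulnC. Qed.

Lemma eb_in e : e < cE -> eb e \in B.
Proof. move=> he; have kp := kpos he; by rewrite /eb mem_nth // HBs ltn_mod. Qed.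

Lemma part_lt (v : 'I_n) : v %/ M < r.
Proof. by rewrite ltn_divLR // (leq_trans (ltn_ord v)). Qed.

Lemma same_part e (v w : 'I_n) : v \in cedge e -> w \in cedge e -> v %/ M = w %/ M -> v = w.
Proof.
rewrite !cedgeP => /eqP hv /eqP hw hp; apply: val_inj => /=.
by rewrite (divn_eq v M) (divn_eq w M) hp hv hw hp.
Qed.

Lemma same_edge e e' i : e < cE -> e' < cE ->
  ea e + i * eb e = ea e' + i * eb e' %[mod M] -> eb e = eb e' -> e = e'.
Proof.
move=> he he' h hb; have kp := kpos he.
have hm : e %% k.-1 = e' %% k.-1.
  by apply/eqP; rewrite -(nth_uniq 0 _ _ HBu) ?HBs ?ltn_mod //; apply/eqP.
have ha : ea e = ea e'.
  apply: (@cancel_small M (i * eb e)); rewrite ?ea_lt //.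
  by rewrite addnC [X in _ = X %[mod M]]addnC hb; rewrite hb in h.
by rewrite (divn_eq e k.-1) (divn_eq e' k.-1) -/(ea e) -/(ea e') ha hm.
Qed.

Lemma c_lin e e' (v w : 'I_n) : e < cE -> e' < cE -> e != e' -> v != w ->
  v \in cedge e -> w \in cedge e -> v \in cedge e' -> w \in cedge e' -> False.
Proof.
move=> he he' ne nvw ve we ve' we'.
case: (eqVneq (v %/ M) (w %/ M)) => hp.
  by move: nvw; rewrite (same_part ve we hp) eqxx.
move: ve we ve'  we'; rewrite !cedgeP => /eqP h1 /eqP h2 /eqP h3 /eqP h4.
set i := v %/ M in h1 h3 hp; set j := w %/ M in h2 h4 hp.
have hi : i < r := part_lt v. have hj : j < r := part_lt w.
have b1 := HBb (eb_in he); have b2 := HBb (eb_in he').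
have c1 : ea e + i * eb e = ea e' + i * eb e' %[mod M] by rewrite -h1 h3.
have c2 : ea e' + j * eb e' = ea e + j * eb e %[mod M] by rewrite -h4 h2.
have c := congD c1 c2.
have c' : ea e + ea e' + (i * eb e + j * eb e') = ea e + ea e' + (i * eb e' + j * eb e) %[mod M].
  move: c; congr (_ = _ %[mod M]); lia.
have hb : i * eb e + j * eb e' = i * eb e' + j * eb e.
  exact: cancel_small c' (small2 hi hj b1 b2) (small2 hi hj b2 b1).
have hbb : eb e = eb e'.
  exact: lin_cancel hp hb.
by move: ne; rewrite (same_edge he he' c1 hbb) eqxx.
Qed.

Lemma c_tri e1 e2 e3 (x12 x13 x23 : 'I_n) : e1 < cE -> e2 < cE -> e3 < cE ->
  e1 != e2 -> e1 != e3 -> e2 != e3 -> x12 != x13 -> x12 != x23 -> x13 != x23 ->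
  x12 \in cedge e1 -> x12 \in cedge e2 -> x13 \in cedge e1 -> x13 \in cedge e3 ->
  x23 \in cedge e2 -> x23 \in cedge e3 -> False.
Proof.
move=> h1 h2 h3 n12 n13 n23 m1 m2 m3 a1 a2 b1 b3 c2 c3.
have pq : x12 %/ M != x13 %/ M by apply/eqP => h; move: m1; rewrite (same_part a1 b1 h) eqxx.
have ps : x12 %/ M != x23 %/ M by apply/eqP => h; move: m2; rewrite (same_part a2 c2 h) eqxx.
have qs : x13 %/ M != x23 %/ M by apply/eqP => h; move: m3; rewrite (same_part b3 c3 h) eqxx.
move: a1 a2 b1 b3 c2 c3; rewrite !cedgeP => /eqP a1 /eqP a2 /eqP b1 /eqP b3 /eqP c2 /eqP c3.
set p := x12 %/ M in a1 a2 pq ps; set q := x13 %/ M in b1 b3 pq qs; set s := x23 %/ M in c2 c3 ps qs.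
have hp : p < r := part_lt x12. have hq : q < r := part_lt x13. have hs : s < r := part_lt x23.
have E1 : ea e1 + p * eb e1 = ea e2 + p * eb e2 %[mod M] by rewrite -a1 a2.
have E2 : ea e3 + q * eb e3 = ea e1 + q * eb e1 %[mod M] by rewrite -b3 b1.
have E3 : ea e2 + s * eb e2 = ea e3 + s * eb e3 %[mod M] by rewrite -c2 c3.
have d12 : eb e1 != eb e2 by apply/eqP => h; move: n12; rewrite (same_edge h1 h2 E1 h) eqxx.
have d13 : eb e1 != eb e3 by apply/eqP => h; move: n13; rewrite (same_edge h3 h1 E2 (esym h)) eqxx.
have d23 : eb e2 != eb e3 by apply/eqP => h; move: n23; rewrite (same_edge h2 h3 E3 h) eqxx.
have B1 := HBb (eb_in h1); have B2 := HBb (eb_in h2); have B3 := HBb (eb_in h3).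
have c := congD (congD E1 E3) E2.
have c' : ea e1 + ea e2 + ea e3 + (p * eb e1 + s * eb e2 + q * eb e3) =
          ea e1 + ea e2 + ea e3 + (q * eb e1 + p * eb e2 + s * eb e3) %[mod M].
  move: c; congr (_ = _ %[mod M]); lia.
have := cancel_small c' (small3 hp hs hq B1 B2 B3) (small3 hq hp hs B1 B2 B3); move=> /eqP.
by apply/negP; apply: HBt; rewrite ?eb_in.
Qed.

Lemma c_size e : e < cE -> #|cedge e| <= r.
Proof.
move=> he; pose g (v : 'I_n) : 'I_r := Ordinal (part_lt v).
rewrite -(@card_in_imset _ _ g); first by rewrite (leq_trans (max_card _)) // card_ord.
move=> v w vi wi /(congr1 val) /= h; exact: same_part vi wi h.
Qed.

Lemma c_deg (u : 'I_n) : k.-1 <= #|[set e : 'I_cE | u \in cedge e]|.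
Proof.
pose i := u %/ M.
pose a (b : 'I_k.-1) := (u %% M + (M - (i * nth 0 B b) %% M)) %% M.
have alt : forall b, a b < M by move=> b; rewrite ltn_mod.
have flt : forall b : 'I_k.-1, a b * k.-1 + b < cE.
  move=> b; have := alt b; have := ltn_ord b; rewrite /cE; nia.
pose f (b : 'I_k.-1) : 'I_cE := Ordinal (flt b).
have fa : forall b, ea (f b) = a b.
  move=> b; rewrite /ea /= divnMDl ?divn_small //; [by rewrite addn0|exact: (leq_ltn_trans _ (ltn_ord b))].
have fb : forall b, eb (f b) = nth 0 B b.
  by move=> b; rewrite /eb /= modnMDl modn_small.
have finj : injective f.
  move=> b b' /(congr1 val) /= h; apply: val_inj => /=.
  have := congr1 (fun x => x %% k.-1) h; rewrite /= !modnMDl !modn_small //.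
have -> : k.-1 = #|[set f b | b : 'I_k.-1]| by rewrite card_imset // card_ord.
apply: subset_leq_card; apply/subsetP => e /imsetP[b _ ->]; rewrite inE cedgeP fa fb.
rewrite /a modnDml; set x := i * nth 0 B b.
rewrite {2}(divn_eq x M).
have xl : x %% M < M by rewrite ltn_mod.
have -> : u %% M + (M - x %% M) + (x %/ M * M + x %% M) = (x %/ M).+1 * M + u %% M by lia.
by rewrite modnMDl modn_mod.
Qed.

Lemma concrete_batch N : n + cE <= N -> 0 < N -> 0 < r ->
  exists G : 'M['F_2]_(n, N), is_batch_code G r k.
Proof.
move=> hN hN0 hr.
apply: (@abstract_batch n k r cE cedge hr c_size c_lin c_tri c_deg N hN hN0).
Qed.

End Concrete.

Section Digits.
Variable D : nat.
Hypothesis HD : 0 < D.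

Lemma sumD m (y : 'I_m.+1 -> nat) :
  \sum_(t < m.+1) y t * D ^ t = y ord0 + D * \sum_(t < m) y (lift ord0 t) * D ^ t.
Proof.
rewrite big_ord_recl expn0 muln1 big_distrr /=; congr (_ + _).
by apply: eq_bigr => i _; rewrite /bump /= add1n expnS mulnCA.
Qed.

Lemma digits_lt m (y : 'I_m -> nat) : (forall t, y t < D) -> \sum_(t < m) y t * D ^ t < D ^ m.
Proof.
elim: m y => [|m IH] y hy; first by rewrite big_ord0 expn0.
rewrite sumD expnS.
have h1 := IH (fun t => y (lift ord0 t)) (fun t => hy _).
have h0 := hy ord0.
set A := \sum_(t < m) _ in h1 *.
apply: (@leq_trans (D * A.+1)); first by rewrite mulnS ltn_add2r.
by rewrite leq_mul2l h1 orbT.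
Qed.

Lemma digits_inj m (y z : 'I_m -> nat) : (forall t, y t < D) -> (forall t, z t < D) ->
  \sum_(t < m) y t * D ^ t = \sum_(t < m) z t * D ^ t -> forall t, y t = z t.
Proof.
elim: m y z => [|m IH] y z hy hz; first by move=> _ [].
rewrite !sumD => h.
set A := \sum_(t < m) _ in h; set B := \sum_(t < m) _ in h.
have h0 : y ord0 = z ord0.
  have := congr1 (modn^~ D) h; rewrite /= ![D * _]mulnC ![_ + _ * D]addnC !modnMDl.
  by rewrite !modn_small.
have hAB : A = B.
  move: h; rewrite h0 => /addnI /eqP; rewrite eqn_mul2l => /orP[/eqP hD0|/eqP //].
  by move: HD; rewrite hD0.
move=> t; case: (unliftP ord0 t) => [t'|] ->; last exact: h0.
exact: (IH (fun t => y (lift ord0 t)) (fun t => z (lift ord0 t)) (fun t => hy _) (fun t => hz _) hAB t').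
Qed.

End Digits.

Lemma conv_int m (x1 x2 x3 : 'I_m -> int) (a1 a2 : int) : a2 != 0%R -> (a1 + a2 != 0)%R ->
  (forall t, a1 * (x1 t - x3 t) + a2 * (x2 t - x3 t) = 0)%R ->
  (\sum_(t < m) (x1 t * x1 t - x3 t * x3 t) = 0)%R ->
  (\sum_(t < m) (x2 t * x2 t - x3 t * x3 t) = 0)%R ->
  forall t, x2 t = x3 t.
Proof.
move=> h2 h12 H S1 S2.
have key : (\sum_(t < m) (a2 * (a1 + a2)) * ((x2 t - x3 t) ^+ 2) = 0)%R.
  transitivity (\sum_(t < m) a1 * (a1 * (x1 t * x1 t - x3 t * x3 t) + a2 * (x2 t * x2 t - x3 t * x3 t)))%R.
    apply: eq_bigr => t _; apply/eqP; rewrite -subr_eq0.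
    have -> : ((a2 * (a1 + a2)) * ((x2 t - x3 t) ^+ 2) -
      a1 * (a1 * (x1 t * x1 t - x3 t * x3 t) + a2 * (x2 t * x2 t - x3 t * x3 t)) =
      (a1 * (x1 t - x3 t) + a2 * (x2 t - x3 t)) *
      (a2 * (x2 t - x3 t) - a1 * (x1 t - x3 t) - 2%:R * a1 * x3 t))%R by ring.
    by rewrite H mul0r.
  by rewrite -mulr_sumr big_split /= -!mulr_sumr S1 S2 !mulr0.
move: key; rewrite -mulr_sumr => /eqP; rewrite !mulf_eq0 (negbTE h2) (negbTE h12) /= => /eqP key.
move=> t; apply/eqP; rewrite -subr_eq0 -sqrf_eq0; apply/eqP.
exact: (psumr_eq0P (fun i _ => sqr_ge0 _) key).
Qed.

Lemma digit_small (p s q r d a b c : nat) : p < r -> s < r -> q < r -> a < d -> b < d -> c < d ->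
  p * a + s * b + q * c < 3 * r * d.
Proof. move=> *; nia. Qed.

Section Behrend.
Variables (r d m : nat).
Hypothesis Hd : 0 < d.
Hypothesis Hr : 0 < r.
Definition DD := 3 * r * d.
Lemma DD_pos : 0 < DD. Proof. by rewrite /DD !muln_gt0 Hd Hr. Qed.

Definition bval (x : {ffun 'I_m -> 'I_d}) := \sum_(t < m) (x t : nat) * DD ^ t.
Definition bsq (x : {ffun 'I_m -> 'I_d}) := \sum_(t < m) (x t : nat) * (x t : nat).

Lemma dig_lt (x : {ffun 'I_m -> 'I_d}) t : (x t : nat) < DD.
Proof. apply: leq_trans (ltn_ord _) _; rewrite /DD; nia. Qed.

Lemma bval_lt x : bval x < DD ^ m.
Proof. rewrite /bval; exact: (digits_lt (y := fun t => (x t : nat)) (dig_lt x)). Qed.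

Lemma bval_inj : injective bval.
Proof.
move=> x y h; apply/ffunP => t; apply: val_inj.
exact: (digits_inj DD_pos (y := fun t => (x t : nat)) (z := fun t => (y t : nat)) (dig_lt x) (dig_lt y) h t).
Qed.

Lemma bval_comb p s q x1 x2 x3 : p * bval x1 + s * bval x2 + q * bval x3 =
  \sum_(t < m) (p * x1 t + s * x2 t + q * x3 t) * DD ^ t.
Proof.
rewrite /bval !big_distrr -!big_split; apply: eq_bigr => t _ /=.
by rewrite !mulnDl !mulnA.
Qed.

Lemma behrend_free x1 x2 x3 : bsq x1 = bsq x3 -> bsq x2 = bsq x3 ->
  bval x2 != bval x3 -> forall p q s, p < r -> q < r -> s < r ->
  p != q -> p != s -> q != s ->
  p * bval x1 + s * bval x2 + q * bval x3 != q * bval x1 + p * bval x2 + s * bval x3.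
Proof.
move=> n13 n23 d23 p q s hp hq hs pq ps qs; apply/negP => /eqP h.
rewrite !bval_comb in h.
have dig := digits_inj DD_pos
  (fun t => digit_small hp hs hq (ltn_ord (x1 t)) (ltn_ord (x2 t)) (ltn_ord (x3 t)))
  (fun t => digit_small hq hp hs (ltn_ord (x1 t)) (ltn_ord (x2 t)) (ltn_ord (x3 t))) h.
have sq : forall (y z : {ffun 'I_m -> 'I_d}), bsq y = bsq z ->
   (\sum_(t < m) ((Posz (y t : nat)) * (Posz (y t : nat)) - (Posz (z t : nat)) * (Posz (z t : nat))) = 0)%R.
  move=> y z hyz; rewrite sumrB; apply/eqP; rewrite subr_eq0; apply/eqP.
  have e : forall w : {ffun 'I_m -> 'I_d}, (\sum_(t < m) ((Posz (w t : nat)) * (Posz (w t : nat))))%R = (Posz (bsq w)).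
    move=> w; rewrite /bsq (big_morph Posz PoszD (erefl _)); apply: eq_bigr => t _.
    by rewrite PoszM.
  by rewrite !e hyz.
have := conv_int (x1 := fun t => (Posz (x1 t : nat))) (x2 := fun t => (Posz (x2 t : nat)))
   (x3 := fun t => (Posz (x3 t : nat))) (a1 := ((Posz p) - (Posz q))%R) (a2 := ((Posz s) - (Posz p))%R).
move=> /(_ _ _ _ (sq _ _ n13) (sq _ _ n23)) h23.
have : bval x2 = bval x3.
  rewrite /bval; apply: eq_bigr => t _; congr (_ * _).
  suff : (Posz (x2 t : nat)) = (Posz (x3 t : nat)) by case.
  apply: h23.
  - by rewrite subr_eq0 eq_sym.
  - have -> : (((Posz p) - (Posz q)) + ((Posz s) - (Posz p)) = (Posz s) - (Posz q))%R by ring.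
    by rewrite subr_eq0 eq_sym.
  - move=> t'; have := congr1 Posz (dig t'); rewrite /= !PoszD !PoszM => ht.
    set X1 := Posz (x1 t'); set X2 := Posz (x2 t'); set X3 := Posz (x3 t').
    rewrite -/X1 -/X2 -/X3 in ht *.
    have -> : ((((Posz p) - (Posz q)) * (X1 - X3) + ((Posz s) - (Posz p)) * (X2 - X3)) =
       ((Posz p) * X1 + (Posz s) * X2 + (Posz q) * X3) - ((Posz q) * X1 + (Posz p) * X2 + (Posz s) * X3))%R by ring.
    by rewrite ht subrr.
by move/eqP; rewrite (negbTE d23).
Qed.


Definition Kc := (m * (d.-1) ^ 2).+1.

Lemma bsq_lt x : bsq x < Kc.
Proof.
rewrite /Kc ltnS /bsq.
apply: (@leq_trans (\sum_(t < m) (d.-1) ^ 2)).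
  apply: leq_sum => t _; have := ltn_ord (x t); move: (x t : nat) => a ha.
  have hd1 : a <= d.-1 by lia. by rewrite (leq_mul hd1 hd1).
by rewrite big_const_ord iter_addn_0 mulnC.
Qed.

Lemma pigeon : exists R, d ^ m <= Kc * #|[set x : {ffun 'I_m -> 'I_d} | bsq x == R]|.
Proof.
pose f (R : 'I_Kc) := #|[set x : {ffun 'I_m -> 'I_d} | bsq x == R]|.
have part : d ^ m = \sum_(R < Kc) f R.
  have -> : d ^ m = #|{ffun 'I_m -> 'I_d}| by rewrite card_ffun !card_ord.
  rewrite -sum1_card (partition_big (fun x => Ordinal (bsq_lt x)) predT) //=.
  apply: eq_bigr => R _; rewrite /f -sum1_card; apply: eq_bigl => x.
  by rewrite inE -val_eqE.
case: (@arg_maxnP _ (ord0 : 'I_Kc) predT f isT) => Rm _ Hmax.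
exists (nat_of_ord Rm); rewrite part.
apply: (@leq_trans (\sum_(R < Kc) f Rm)); first by apply: leq_sum => R _; apply: Hmax.
by rewrite big_const_ord iter_addn_0 mulnC.
Qed.

Lemma behrend_set kk : Kc * kk <= d ^ m ->
  exists B : seq nat, [/\ uniq B, size B = kk, (forall b, b \in B -> b < DD ^ m) &
    forall b1 b2 b3, b1 \in B -> b2 \in B -> b3 \in B ->
    b1 != b2 -> b1 != b3 -> b2 != b3 -> forall p q s, p < r -> q < r -> s < r ->
    p != q -> p != s -> q != s -> p * b1 + s * b2 + q * b3 != q * b1 + p * b2 + s * b3].
Proof.
move=> hk; have [R hR] := pigeon.
set F := [set x | bsq x == R] in hR.
have hkF : kk <= #|F|.
  by rewrite -(@leq_pmul2l Kc) // (leq_trans hk hR).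
exists (take kk (map bval (enum F))); split.
- by apply: take_uniq; rewrite map_inj_uniq ?enum_uniq //; exact: bval_inj.
- by rewrite size_takel // size_map -cardE.
- by move=> b /mem_take /mapP[x _ ->]; exact: bval_lt.
- move=> b1 b2 b3 /mem_take /mapP[x1 h1 ->] /mem_take /mapP[x2 h2 ->] /mem_take /mapP[x3 h3 ->].
  move=> _ _ d23; apply: behrend_free => //.
  + by move: h1 h3; rewrite !mem_enum !inE => /eqP -> /eqP ->.
  + by move: h2 h3; rewrite !mem_enum !inE => /eqP -> /eqP ->.
Qed.

End Behrend.

Lemma expn_pow m n : expn m n = Nat.pow m n.
Proof. elim: n => [|n IH]; first by rewrite expn0. by rewrite expnS IH mulnE. Qed.

Lemma INR_expn m n : INR (expn m n) = Rpow_def.pow (INR m) n.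
Proof. by rewrite expn_pow pow_INR. Qed.

Section RealPart.
Local Open Scope R_scope.

Lemma real_part (alpha : R) (k : nat -> nat) : 0 < alpha -> alpha < 1 -> bigO_pow k alpha ->
  exists q K0 n1 : nat, (1 < q)%N /\ forall n : nat, (n1 <= n)%N ->
     (expn (k n) q <= K0 * expn n q.-1)%N.
Proof.
move=> ha0 ha1 [C [n1 H]].
have [q0 hq0] := INR_unbounded (/ (1 - alpha)).
set q := maxn q0 2.
have hq2 : (1 < q)%N by rewrite /q leq_max leqnn orbT.
have hqR : INR q0 <= INR q by apply: le_INR; apply/leP; rewrite /q leq_max leqnn.
have hq1 : 1 <= INR q by replace 1 with (INR 1) by reflexivity; apply: le_INR; apply/leP; apply: ltnW.
set e := INR q.-1 / INR q.
have hqm : INR q.-1 = INR q - 1.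
  rewrite -{2}(prednK (ltnW hq2)) S_INR; lra.
have hae : alpha <= e.
  rewrite /e hqm.
  have h1 : / (1 - alpha) < INR q by lra.
  have h2 : 1 < INR q * (1 - alpha).
    have := Rmult_lt_compat_r (1 - alpha) _ _ ltac:(lra) h1.
    by rewrite Rinv_l; lra.
  apply: (Rmult_le_reg_r (INR q)); first lra.
  rewrite /Rdiv Rmult_assoc Rinv_l; lra.
set C' := Rabs C.
set K0 := Z.to_nat (up (C' ^ q)).
have hK0 : C' ^ q <= INR K0.
  have [h1 _] := archimed (C' ^ q).
  have hpos : 0 <= C' ^ q by apply: pow_le; apply: Rabs_pos.
  rewrite /K0 INR_IZR_INZ Z2Nat.id; first lra.
  apply: le_IZR; lra.
exists q, K0, (maxn n1 1); split => // n; rewrite geq_max => /andP[hn1 hn0].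
have hx : 1 <= INR n by replace 1 with (INR 1) by reflexivity; apply: le_INR; apply/leP.
have hk := H n hn1.
have hpe : 0 < Rpower (INR n) e by apply: exp_pos.
have hk' : INR (k n) <= C' * Rpower (INR n) e.
  apply: (Rle_trans _ _ _ hk).
  apply: (Rle_trans _ (C' * Rpower (INR n) alpha)).
    apply: Rmult_le_compat_r; [left; apply: exp_pos | apply: Rle_abs].
  apply: Rmult_le_compat_l; first apply: Rabs_pos.
  exact: Rle_Rpower.
have hpow : Rpower (INR n) e ^ q = INR n ^ q.-1.
  rewrite -Rpower_pow // Rpower_mult -Rpower_pow; last lra.
  congr Rpower; rewrite /e /Rdiv Rmult_assoc Rinv_l; lra.
have hkq : INR (k n) ^ q <= INR K0 * INR n ^ q.-1.
  apply: (Rle_trans _ ((C' * Rpower (INR n) e) ^ q)).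
    apply: pow_incr; split; [apply: pos_INR | exact: hk'].
  rewrite Rpow_mult_distr hpow.
  apply: Rmult_le_compat_r; [apply: pow_le; lra | exact: hK0].
apply/leP; apply: INR_le.
by rewrite mult_INR !INR_expn.
Qed.

End RealPart.

Lemma leq_expr m n e : m <= n -> m ^ e <= n ^ e.
Proof. by case: e => [|e] h; rewrite ?expn0 // leq_exp2r. Qed.

Lemma key_ineq (q K0 d D c1 m n kk : nat) : 0 < d -> 0 < q -> d ^ q = 2 ^ q.+1 * D ^ q.-1 ->
  kk ^ q <= K0 * n ^ q.-1 -> n <= c1 * D ^ m -> d ^ (2 * q) * K0 * c1 ^ q.-1 <= 2 ^ m ->
  (m * (d.-1) ^ 2).+1 * kk.-1 <= d ^ m.
Proof.
move=> hd hq hdq hk hn hc.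
rewrite -(leq_exp2r _ _ hq).
set K := (m * (d.-1) ^ 2).+1.
have hK : K <= d ^ 2 * 2 ^ m.
  apply: (@leq_trans (m.+1 * d ^ 2)); first by rewrite /K; nia.
  by rewrite mulnC leq_mul2l ltn_expl // orbT.
have e1 : (d ^ m) ^ q = 2 ^ m * (2 ^ (m * q) * D ^ (m * q.-1)).
  rewrite -expnM (mulnC m q) expnM hdq expnMn -!expnM mulSn expnD.
  by rewrite (mulnC q m) (mulnC q.-1 m) mulnA.
have e2 : (K * kk.-1) ^ q <= K ^ q * kk ^ q.
  by rewrite expnMn leq_mul2l leq_expr ?leq_pred ?orbT.
have e3 : K ^ q <= d ^ (2 * q) * 2 ^ (m * q).
  apply: (leq_trans (leq_expr q hK)).
  by rewrite expnMn -!expnM (mulnC m q).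
have e4 : kk ^ q <= K0 * (c1 ^ q.-1 * D ^ (m * q.-1)).
  apply: (leq_trans hk); rewrite leq_mul2l; apply/orP; right.
  by rewrite expnM -expnMn; apply: leq_expr.
rewrite e1; apply: (leq_trans e2).
apply: (leq_trans (leq_mul e3 e4)).
set X := 2 ^ (m * q) * D ^ (m * q.-1).
have -> : d ^ (2 * q) * 2 ^ (m * q) * (K0 * (c1 ^ q.-1 * D ^ (m * q.-1))) =
  (d ^ (2 * q) * K0 * c1 ^ q.-1) * X by rewrite /X; lia.
by rewrite leq_mul2r hc orbT.
Qed.

Lemma rate_eq n r kk : 0 < r -> 0 < n -> r %| n * kk ->
  rate n (n + n * kk %/ r) = GRing.mul (r%:R : rat) (GRing.inv ((r + kk)%:R : rat)).
Proof.
move=> hr hn hdiv; rewrite /rate; apply/eqP.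
rewrite eqr_div ?pnatr_eq0 -?lt0n ?addn_gt0 ?hn ?hr // -!natrM eqr_nat.
have h := divnK hdiv.
apply/eqP; rewrite mulnDr mulnDr (mulnC r (n * kk %/ r)) h; lia.
Qed.

Lemma div_bound (n r M kk : nat) : 0 < r -> M = n %/ r + 1 -> r * kk <= n ->
  M * kk.-1 <= n * kk %/ r.
Proof.
move=> hr hM hk; rewrite leq_divRL //.
have h1 : r * M <= n + r by rewrite hM mulnDr muln1 leq_add2r mulnC leq_trunc_div.
nia.
Qed.

Lemma nat_part (r q K0 n1 : nat) (k : nat -> nat) : 3 <= r -> 1 < q ->
  (forall n, n1 <= n -> k n ^ q <= K0 * n ^ q.-1) ->
  exists n0 : nat, forall n : nat, (n0 <= n)%N -> (r %| n * k n)%N ->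
      exists (N : nat) (G : 'M['F_2]_(n, N)),
        is_batch_code G r (k n) /\
        rate n N = GRing.mul (r%:R : rat) (GRing.inv ((r + k n)%:R : rat)).
Proof.
move=> hr3 hq hk.
have hr : 0 < r by apply: leq_trans hr3.
have hq0 : 0 < q by apply: ltnW.
set d := 2 ^ q.+1 * (3 * r) ^ q.-1.
set D := DD r d.
set c1 := 3 * r * r * D.
set c2 := d ^ (2 * q) * K0 * c1 ^ q.-1.
exists (maxn n1 (maxn (r * (3 * r) * D ^ c2) (r ^ q * K0).+1)).
move=> n; rewrite !geq_max => /and3P[hn1 hn2 hn3] hdiv.
set kk := k n.
have hd : 0 < d by rewrite /d muln_gt0 !expn_gt0 /= muln_gt0 hr.
have hD1 : 1 < D by rewrite /D /DD; apply: (@leq_trans (3 * 3 * 1)) => //; apply: leq_mul => //; apply: leq_mul.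
have hdq : d ^ q = 2 ^ q.+1 * D ^ q.-1.
  rewrite /D /DD expnMn mulnA -/d -{1}(prednK hq0) expnS //.
have hn0 : 0 < n by apply: leq_trans hn3.
set M := n %/ r + 1.
have hM : 0 < M by rewrite /M addn1.
have hnM : n < r * M.
  rewrite /M mulnDr muln1 {1}(divn_eq n r) mulnC ltn_add2l ltn_mod //.
have h3r : 0 < 3 * r by rewrite muln_gt0 hr.
set X := D ^ c2.
have F1 : X <= M %/ (3 * r).
  rewrite leq_divRL //.
  have : r * (X * (3 * r)) < r * M.
    by apply: leq_ltn_trans hnM; rewrite (mulnC X) mulnA.
  by rewrite ltn_pmul2l // => /ltnW.
have Xpos : 0 < X by rewrite expn_gt0 ltnW.
set m := trunc_log D (M %/ (3 * r)).
have F2 : c2 <= m by apply: trunc_log_max.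
have F3 : D ^ m * (3 * r) <= M.
  by rewrite -leq_divRL //; apply: trunc_logP => //; apply: leq_trans F1.
have F4 : M < D ^ m.+1 * (3 * r).
  by rewrite -ltn_divLR //; apply: trunc_log_ltn.
have F5 : n <= c1 * D ^ m.
  apply: ltnW; apply: (leq_trans hnM).
  have : r * M <= r * (D ^ m.+1 * (3 * r)) by rewrite leq_mul2l ltnW ?F4 ?orbT.
  by move=> h; apply: (leq_trans h); rewrite expnS /c1; apply/eq_leq; ring.
have hkq : kk ^ q <= K0 * n ^ q.-1 by apply: hk.
have hc : c2 <= 2 ^ m by apply: leq_trans F2 (ltnW (ltn_expl m _)).
have key := key_ineq hd hq0 hdq hkq F5 hc.
have [B [HBu HBs HBb HBt]] := @behrend_set r d m hd hr kk.-1 key.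
have hrk : r * kk <= n.
  rewrite -(@leq_exp2r _ _ q) // expnMn.
  apply: (@leq_trans (r ^ q * (K0 * n ^ q.-1))); first by rewrite leq_mul2l hkq orbT.
  rewrite -{3}(prednK hq0) expnS mulnA leq_mul2r; apply/orP; right; exact: ltnW.
have hBb : forall b, b \in B -> 3 * r * b < M.
  move=> b hb; have := HBb b hb; rewrite -/D => hb'.
  have : b * (3 * r) < D ^ m * (3 * r) by rewrite ltn_pmul2r.
  by move=> h; apply: leq_trans F3; rewrite mulnC.
exists (n + n * kk %/ r).
have hN : n + cE M kk <= n + n * kk %/ r.
  by rewrite leq_add2l /cE; apply: div_bound.
have [G HG] := concrete_batch hM (ltnW hnM) HBu HBs hBb HBt hN (ltn_addr _ hn0) hr.
exists G; split => //.
exact: rate_eq.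
Qed.

Theorem theorem12 :
  forall (alpha : R) (r : nat) (k : nat -> nat),
    Rlt 0 alpha -> Rlt alpha 1 -> (3 <= r)%N -> bigO_pow k alpha ->
    exists n0 : nat, forall n : nat, (n0 <= n)%N -> (r %| n * k n)%N ->
      exists (N : nat) (G : 'M['F_2]_(n, N)),
        is_batch_code G r (k n) /\
        rate n N = GRing.mul (r%:R : rat) (GRing.inv ((r + k n)%:R : rat)).
Proof.
move=> alpha r k ha0 ha1 hr hO.
have [q [K0 [n1 [hq hk]]]] := real_part ha0 ha1 hO.
exact: (nat_part hr hq hk).
Qed.
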